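(* Let $\Delta\ge 4$ be an integer and let $c_1,\dots,c_\Delta$ be defined by $c_\Delta=\frac{1}{\Delta}$ and $ic_i+c_{i+1}=1$ for $i=1,\dots,\Delta-1$. Then: (a) $\frac{1}{i+1}<c_i=\frac{1}{i+1}+\frac{c_{i+2}}{i(i+1)}$ for $1\le i\le \Delta-2$, and $c_i<\frac{i+1}{i(i+2)}$ for $1\le i\le \Delta-3$; (b) $c_{i+1}<c_i$ for $i=1,\dots,\Delta-2$; (c) if $i\le \Delta-2$ and $i\equiv \Delta \pmod 2$, then $$c_i=\frac{1}{i+1}+\sum_{j=1}^{\frac{\Delta-i-2}{2}}\frac{i+2j}{i(i+1)\cdots(i+2j+1)}+\frac{1}{i(i+1)\cdots\Delta};$$ (d) if $i\le \Delta-3$ and $i\equiv \Delta-1 \pmod 2$, then $$c_i=\frac{1}{i+1}+\sum_{j=1}^{\frac{\Delta-i-3}{2}}\frac{i+2j}{i(i+1)\cdots(i+2j+1)}+\frac{\Delta-1}{i(i+1)\cdots\Delta}.$$ (Here $i$ ranges over positive integers, and an empty sum equals $0$.) *)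

(* Defs.v *)
From mathcomp Require Import all_boot all_order all_algebra.
Set Implicit Arguments. Unset Strict Implicit. Unset Printing Implicit Defensive.
Import Order.TTheory GRing.Theory Num.Theory.
Local Open Scope ring_scope.

Definition rprod (R : ringType) (a b : nat) : R := \prod_(a <= k < b.+1) (k%:R : R).

(* Main.v *)
Require Import Defs.
From mathcomp Require Import all_boot all_order all_algebra.
From mathcomp Require Import ring lra zify.
Import Order.TTheory GRing.Theory Num.Theory.
Local Open Scope ring_scope.

Lemma rprod1 (R : realFieldType) a : rprod R a a = a%:R.
Proof. by rewrite /rprod big_nat1. Qed.

Lemma rprodS (R : realFieldType) a b : (a <= b.+1)%N ->
  rprod R a b.+1 = rprod R a b * (b.+1)%:R.
Proof. by move=> h; rewrite /rprod big_nat_recr. Qed.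

Lemma rprod_gt0 (R : realFieldType) a b : (0 < a)%N -> 0 < rprod R a b.
Proof.
move=> ha; rewrite /rprod big_nat_cond; apply: prodr_gt0 => k /andP[/andP[hk _] _].
rewrite ltr0n; exact: leq_trans ha hk.
Qed.

Lemma rprodP (R : realFieldType) a b : (0 < b)%N -> (a <= b)%N ->
  rprod R a b = rprod R a b.-1 * b%:R.
Proof. by move=> hb hab; rewrite -{1}(prednK hb) rprodS ?prednK. Qed.

Theorem lemma1 (R : realFieldType) (D : nat) (c : nat -> R)
  (hD : (4 <= D)%N)
  (hcD : c D = 1 / D%:R)
  (hrec : forall i : nat, (1 <= i <= D - 1)%N -> i%:R * c i + c i.+1 = 1) :
  (* (a) *)
  (forall i : nat, (1 <= i <= D - 2)%N ->
     1 / (i.+1)%:R < c i /\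
     c i = 1 / (i.+1)%:R + c i.+2 / (i%:R * (i.+1)%:R)) /\
  (forall i : nat, (1 <= i <= D - 3)%N ->
     c i < (i.+1)%:R / (i%:R * (i.+2)%:R)) /\
  (* (b) *)
  (forall i : nat, (1 <= i <= D - 2)%N -> c i.+1 < c i) /\
  (* (c) *)
  (forall i : nat, (1 <= i <= D - 2)%N -> ~~ odd (D - i) ->
     c i = 1 / (i.+1)%:R
           + \sum_(1 <= j < ((D - i - 2) %/ 2).+1)
               (i + 2 * j)%:R / rprod R i (i + 2 * j + 1)
           + 1 / rprod R i D) /\
  (* (d) *)
  (forall i : nat, (1 <= i <= D - 3)%N -> odd (D - i) ->
     c i = 1 / (i.+1)%:R
           + \sum_(1 <= j < ((D - i - 3) %/ 2).+1)
               (i + 2 * j)%:R / rprod R i (i + 2 * j + 1)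
           + (D - 1)%:R / rprod R i D).
Proof.
have nS k : (k.+1)%:R = k%:R + 1 :> R by rewrite -addn1 natrD.
have aeq k : (1 <= k <= D - 2)%N ->
    c k = 1 / (k.+1)%:R + c k.+2 / (k%:R * (k.+1)%:R).
  move=> hk.
  have h1 := hrec k ltac:(lia). have h2 := hrec k.+1 ltac:(lia).
  have e1 : c k.+1 = 1 - k%:R * c k by apply/eqP; rewrite eq_sym subr_eq addrC h1.
  have e2 : c k.+2 = 1 - (k.+1)%:R * c k.+1 by apply/eqP; rewrite eq_sym subr_eq addrC h2.
  have k0 : k%:R != 0 :> R by rewrite pnatr_eq0; lia.
  have k1 : k%:R + 1 != 0 :> R by rewrite -nS pnatr_eq0.
  rewrite e2 e1 nS. field; by rewrite k0 k1.
have cD1 : c D.-1 = 1 / D%:R.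
  have h := hrec D.-1 ltac:(lia).
  have e : (D.-1).+1 = D by lia.
  rewrite e hcD in h.
  have d0 : D.-1%:R != 0 :> R by rewrite pnatr_eq0; lia.
  have dD : D%:R = D.-1%:R + 1 :> R by rewrite -nS e.
  have d1 : D.-1%:R + 1 != 0 :> R by rewrite -dD pnatr_eq0; lia.
  apply: (mulfI d0); rewrite dD in h *.
  have hx : D.-1%:R * c D.-1 = 1 - 1/(D.-1%:R+1) by apply/eqP; rewrite eq_sym subr_eq h.
  rewrite hx; field; exact: d1.
have pos : forall t k, (D - k <= t)%N -> (1 <= k <= D)%N -> 0 < c k.
  elim=> [|t IH] k hk hk2.
    have -> : k = D by lia.
    by rewrite hcD divr_gt0 // ltr0n; lia.
  case: (leqP (D - k) t) => ht; first exact: IH.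
  case: (eqVneq k D.-1) => [->|hne].
    by rewrite cD1 divr_gt0 // ltr0n; lia.
  rewrite aeq; last by lia.
  apply: addr_gt0; first by rewrite divr_gt0 // ltr0n.
  apply: divr_gt0; first by apply: IH; lia.
  by apply: mulr_gt0; rewrite ltr0n; lia.
have lb k : (1 <= k <= D - 2)%N -> 1 / (k.+1)%:R < c k.
  move=> hk; rewrite (aeq k hk) ltrDl; apply: divr_gt0.
    by apply: (pos D); lia.
  by apply: mulr_gt0; rewrite ltr0n; lia.
have ub k : (1 <= k <= D - 3)%N -> c k < (k.+1)%:R / (k%:R * (k.+2)%:R).
  move=> hk; have h := lb k.+1 ltac:(lia); have h1 := hrec k ltac:(lia).
  have e1 : c k.+1 = 1 - k%:R * c k by apply/eqP; rewrite eq_sym subr_eq addrC h1.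
  rewrite e1 in h.
  have kp : 0 < k%:R :> R by rewrite ltr0n; lia.
  rewrite -(ltr_pM2l kp).
  have -> : k%:R * ((k.+1)%:R / (k%:R * (k.+2)%:R)) = 1 - 1 / (k.+2)%:R :> R.
    have k0 : k%:R != 0 :> R by rewrite pnatr_eq0; lia.
    have k2 : k%:R + 1 + 1 != 0 :> R by rewrite -!nS pnatr_eq0.
    rewrite !nS; field; by rewrite k0 k2.
  by rewrite ltrBrDr; rewrite ltrBrDl in h.
have dec k : (1 <= k <= D - 2)%N -> c k.+1 < c k.
  move=> hk; have h := lb k hk; have h1 := hrec k ltac:(lia).
  have e1 : c k.+1 = 1 - k%:R * c k by apply/eqP; rewrite eq_sym subr_eq addrC h1.
  rewrite e1; rewrite ltr_pdivrMr in h; last by rewrite ltr0n.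
  rewrite nS in h; lra.
have gen n i : (1 <= i)%N -> (i + 2 * n + 2 <= D)%N ->
    c i = 1 / (i.+1)%:R
          + \sum_(1 <= j < n.+1) (i + 2 * j)%:R / rprod R i (i + 2 * j + 1)%N
          + c (i + 2 * n + 2)%N / rprod R i (i + 2 * n + 1)%N.
  move=> hi; elim: n => [|n IH] hn.
    rewrite big_geq // addr0.
    rewrite ?muln0 ?addn0 ?addn2 ?addn1.
    rewrite rprodS // rprod1; apply: aeq; lia.
  rewrite IH; last lia.
  rewrite [in RHS]big_nat_recr //=.
  rewrite (_ : (i + 2 * n.+1 + 2 = (i + 2 * n + 1).+3)%N); last lia.
  rewrite (_ : (i + 2 * n.+1 + 1 = (i + 2 * n + 1).+2)%N); last lia.
  rewrite (_ : (i + 2 * n.+1 = (i + 2 * n + 1).+1)%N); last lia.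
  rewrite (_ : (i + 2 * n + 2 = (i + 2 * n + 1).+1)%N); last lia.
  set p := (i + 2 * n + 1)%N.
  rewrite -!addrA; congr (_ + (_ + _)).
  rewrite (@rprodS R i p.+1); last lia.
  rewrite (@rprodS R i p); last lia.
  rewrite (aeq p.+1); last lia.
  have P0 : rprod R i p != 0 by rewrite gt_eqF // rprod_gt0.
  have p0 : p.+1%:R != 0 :> R by rewrite pnatr_eq0.
  have p1 : p.+1%:R + 1 != 0 :> R by rewrite -nS pnatr_eq0.
  rewrite (nS p.+1); field.
  have pp : 0 <= p%:R :> R := ler0n _ _.
  have q1 : 0 < 1 + p%:R + 1 :> R by lra.
  have q2 : 0 < 1 + p%:R :> R by lra.
  by rewrite (gt_eqF q1) (gt_eqF q2) P0.
split.
  by move=> i hi; split; [exact: lb | exact: aeq].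
split; first exact: ub.
split; first exact: dec.
split.
  move=> i hi ho.
  have h2 : ((D - i) %% 2 = 0)%N by rewrite modn2 (negbTE ho).
  rewrite (gen ((D - i - 2) %/ 2)%N i); [|lia|lia].
  rewrite (_ : (i + 2 * ((D - i - 2) %/ 2) + 2)%N = (D)%N); last lia.
  rewrite (_ : (i + 2 * ((D - i - 2) %/ 2) + 1)%N = (D.-1)%N); last lia.
  rewrite hcD (@rprodP R i D); [|lia|lia].
  have P0 : rprod R i D.-1 != 0 by rewrite gt_eqF // rprod_gt0 //; case/andP: hi.
  have d0 : D%:R != 0 :> R by rewrite pnatr_eq0; lia.
  congr (_ + _ + _); field; by rewrite P0 d0.
move=> i hi ho.
have h2 : ((D - i) %% 2 = 1)%N by rewrite modn2 ho.
rewrite (gen ((D - i - 3) %/ 2)%N i); [|lia|lia].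
rewrite (_ : (i + 2 * ((D - i - 3) %/ 2) + 2)%N = (D.-1)%N); last lia.
rewrite (_ : (i + 2 * ((D - i - 3) %/ 2) + 1)%N = (D.-1.-1)%N); last lia.
rewrite (_ : (D - 1 = D.-1)%N); last lia.
rewrite cD1 (@rprodP R i D); [|lia|lia].
rewrite (@rprodP R i D.-1); [|lia|lia].
have P0 : rprod R i D.-1.-1 != 0 by rewrite gt_eqF // rprod_gt0 //; case/andP: hi.
have d0 : D%:R != 0 :> R by rewrite pnatr_eq0; lia.
have d1 : D.-1%:R != 0 :> R by rewrite pnatr_eq0; lia.
congr (_ + _ + _); field; by rewrite P0 d0 d1.
Qed.
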